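(* The complex $\mathcal{M}(\partial\Delta^2)$ is the $1$-skeleton of a triangular prism (a graph with $6$ vertices and $9$ edges), so $\mathcal{M}(\partial\Delta^2)\simeq\bigvee^4S^1$; moreover $\mathcal{M}(\Delta^2)$ collapses simplicially onto its subcomplex $\mathcal{M}(\partial\Delta^2)$, hence $\mathcal{M}(\Delta^2)\simeq\bigvee^4S^1$.
   Context: All simplicial complexes are finite abstract simplicial complexes; simplices are nonempty. $\Delta^n$ is the simplicial complex of all nonempty subsets of an $(n+1)$-element vertex set, and $\partial\Delta^n$ the subcomplex of proper nonempty subsets. The Hasse diagram $\mathcal{H}(K)$ of $K$ is the directed graph whose vertices are the simplices of $K$, with an edge $\sigma\to\tau$ whenever $\sigma\subsetneq\tau$ and $\dim\tau=\dim\sigma+1$. A matching on $\mathcal{H}(K)$ is a set $W$ of edges of $\mathcal{H}(K)$, no two sharing a vertex; an edge in $W$ is called a pair. $W$ is acyclic if the directed graph obtained from $\mathcal{H}(K)$ by reversing every edge in $W$ has no directed cycle. The complex of discrete Morse matchings $\mathcal{M}(K)$ is the simplicial complex whose vertices are the edges of $\mathcal{H}(K)$ and whose simplices are the nonempty acyclic matchings on $\mathcal{H}(K)$; $\mathcal{M}(\partial\Delta^2)$ is regarded as a subcomplex of $\mathcal{M}(\Delta^2)$ via the map sending each pair to itself. *)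

(* Defs.v *)
From mathcomp Require Import all_boot.
Set Implicit Arguments. Unset Strict Implicit. Unset Printing Implicit Defensive.

Section SimplicialDefs.
Variable V : finType.

Definition simplicial_complex (K : {set {set V}}) : bool :=
  (set0 \notin K) &&
  [forall s in K, forall t : {set V}, (t != set0) && (t \subset s) ==> (t \in K)].

Definition hasse (K : {set {set V}}) (s t : {set V}) : bool :=
  [&& s \in K, t \in K, s \proper t & #|t| == #|s|.+1].

Definition hedge := ({set V} * {set V})%type.

Definition matching (K : {set {set V}}) (W : {set hedge}) : bool :=
  [forall e in W, hasse K e.1 e.2] &&
  [forall e1 in W, forall e2 in W,
     (e1 != e2) ==> [disjoint [set e1.1; e1.2] & [set e2.1; e2.2]]].

Definition reversed_rel (K : {set {set V}}) (W : {set hedge}) : rel {set V} :=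
  fun s t => (hasse K s t && ((s, t) \notin W)) || ((t, s) \in W).

Definition has_dicycle (T : finType) (r : rel T) : bool :=
  [exists x, exists y, r x y && connect r y x].

Definition acyclic_matching (K : {set {set V}}) (W : {set hedge}) : bool :=
  matching K W && ~~ has_dicycle (reversed_rel K W).

(* The complex of discrete Morse matchings M(K); its vertex type is the type
   of (potential) Hasse edges, and its simplices are the nonempty acyclic
   matchings. *)
Definition morse_complex (K : {set {set V}}) : {set {set hedge}} :=
  [set W : {set hedge} | (W != set0) && acyclic_matching K W].

Definition elementary_collapse (K L : {set {set V}}) : Prop :=
  exists s t : {set V},
    [/\ s \in K, t \in K, s \proper t & #|t| = #|s|.+1] /\
    (forall r, r \in K -> s \proper r -> r = t) /\
    L = K :\ s :\ t.

Inductive collapses : {set {set V}} -> {set {set V}} -> Prop :=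
  | collapses_refl K : collapses K K
  | collapses_step K K' L : elementary_collapse K K' -> collapses K' L -> collapses K L.

End SimplicialDefs.

Definition Delta2 : {set {set 'I_3}} := [set s : {set 'I_3} | s != set0].
Definition bDelta2 : {set {set 'I_3}} :=
  [set s : {set 'I_3} | (s != set0) && (s != setT)].

(* The 1-skeleton of the triangular prism, on vertex set 'I_3 * bool:
   two triangles (fixed bool coordinate) joined by the three vertical edges
   (fixed 'I_3 coordinate). 6 vertices, 9 edges. *)
Definition prism_edge (x y : 'I_3 * bool) : bool :=
  (x != y) && ((x.1 == y.1) || (x.2 == y.2)).
Definition prism1 : {set {set ('I_3 * bool)}} :=
  [set s : {set ('I_3 * bool)} |
     [exists x, s == [set x]] || [exists x, exists y, prism_edge x y && (s == [set x; y])]].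

Definition simplicial_iso (U W : finType) (K : {set {set U}}) (L : {set {set W}}) : Prop :=
  exists f : U -> W, injective f /\ L = [set f @: (s : {set U}) | s in K].

(* Main.v *)
Require Import Defs.
From mathcomp Require Import all_boot.
Set Implicit Arguments. Unset Strict Implicit. Unset Printing Implicit Defensive.


Definition on (n k : nat) : 'I_n.+1 := Ordinal (ltn_pmod k (ltn0Sn n)).

Lemma on_val n (i : 'I_n.+1) : on n (val i) = i.
Proof. apply: val_inj => /=; exact: modn_small. Qed.

Lemma forallI n (P : pred 'I_n.+1) :
  [forall i, P i] = all (fun k => P (on n k)) (iota 0 n.+1).
Proof.
apply/forallP/allP => [H k _ | H i]; first exact: H.
rewrite -(on_val i); apply: H; rewrite mem_iota /=; exact: ltn_ord.
Qed.

Lemma existsI n (P : pred 'I_n.+1) :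
  [exists i, P i] = has (fun k => P (on n k)) (iota 0 n.+1).
Proof.
apply/existsP/hasP => [[i Hi] | [k _ Hk]]; last by exists (on n k).
exists (val i); first by rewrite mem_iota /= ltn_ord.
by rewrite on_val.
Qed.

Definition bitsS n (A : {set 'I_n.+1}) : seq bool := [seq on n k \in A | k <- iota 0 n.+1].

Lemma size_bitsS n (A : {set 'I_n.+1}) : size (bitsS A) = n.+1.
Proof. by rewrite size_map size_iota. Qed.

Lemma nth_bitsS n (A : {set 'I_n.+1}) k : k < n.+1 -> nth false (bitsS A) k = (on n k \in A).
Proof.
move=> Hk; rewrite (nth_map 0) ?size_iota // nth_iota //.
Qed.

Lemma bitsS_inj n : injective (@bitsS n).
Proof.
move=> A B E; apply/setP => i; rewrite -(on_val i).
by rewrite -!nth_bitsS ?ltn_ord // E.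
Qed.

Lemma eq_bits n (A B : {set 'I_n.+1}) : (A == B) = (bitsS A == bitsS B).
Proof. apply/eqP/eqP => [->//|]; exact: bitsS_inj. Qed.

Definition subb (x y : seq bool) := all2 (fun a b => a ==> b) x y.

Lemma sub_bits n (A B : {set 'I_n.+1}) : (A \subset B) = subb (bitsS A) (bitsS B).
Proof.
rewrite /subb /bitsS. apply/subsetP/idP.
- move=> H. elim: (iota 0 n.+1) => //= k l ->; rewrite andbT.
  by apply/implyP => /H.
- move=> H i Hi; rewrite -(on_val i) in Hi *.
  have : val i \in iota 0 n.+1 by rewrite mem_iota /= ltn_ord.
  move: H Hi; elim: (iota 0 n.+1) => //= k l IH /andP[H1 H2] Hi.
  rewrite inE => /orP[/eqP E|]; first by rewrite -E in H1; exact: (implyP H1).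
  exact: IH.
Qed.

Lemma card_bits n (A : {set 'I_n.+1}) : #|A| = count id (bitsS A).
Proof.
rewrite /bitsS count_map -val_enum_ord count_map.
rewrite (eq_count (a2 := mem A)); last by move=> i /=; rewrite on_val.
rewrite cardE /enum_mem size_filter count_filter; apply: eq_count => i; by rewrite /= andbT.
Qed.


Definition bitn a i := odd (a %/ 2 ^ i).
Definition s (a : nat) : {set 'I_3} := [set i : 'I_3 | bitn a i].
Definition bits3 a := [:: bitn a 0; bitn a 1; bitn a 2].
Definition code (x : {set 'I_3}) : nat :=
  (on 2 0 \in x) + 2 * (on 2 1 \in x) + 4 * (on 2 2 \in x).

Lemma bitsS_s a : bitsS (s a) = bits3 a.
Proof. by rewrite /bitsS /= !inE. Qed.

Lemma code_lt x : code x < 8.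
Proof. rewrite /code; by case: (on 2 0 \in x); case: (on 2 1 \in x); case: (on 2 2 \in x). Qed.

Lemma s_code x : s (code x) = x.
Proof.
apply: bitsS_inj; rewrite bitsS_s /bitsS /bits3 /code /=.
by case: (on 2 0 \in x); case: (on 2 1 \in x); case: (on 2 2 \in x).
Qed.

Definition f3 := [:: false; false; false].
Lemma bitsS0 : bitsS (set0 : {set 'I_3}) = f3.
Proof. by rewrite /bitsS /= !inE. Qed.
Lemma bitsST : bitsS (setT : {set 'I_3}) = [:: true; true; true].
Proof. by rewrite /bitsS /= !inE. Qed.

Definition hD a b := [&& bits3 a != f3, bits3 b != f3,
  subb (bits3 a) (bits3 b) && ~~ subb (bits3 b) (bits3 a) &
  count id (bits3 b) == (count id (bits3 a)).+1].
Definition hB a b := [&& hD a b, bits3 a != [:: true; true; true] & bits3 b != [:: true; true; true]].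

Lemma hasseD a b : hasse Delta2 (s a) (s b) = hD a b.
Proof.
by rewrite /hasse /hD /Delta2 !inE properE !eq_bits !sub_bits !card_bits !bitsS_s bitsS0.
Qed.

Lemma hasseB a b : hasse bDelta2 (s a) (s b) = hB a b.
Proof.
rewrite /hasse /hB /hD /bDelta2 !inE properE !eq_bits !sub_bits !card_bits !bitsS_s bitsS0 bitsST.
by case: (bits3 a == f3); case: (bits3 b == f3); case: (bits3 a == _); case: (bits3 b == _);
   rewrite ?andbF ?andbT.
Qed.


Definition hl1 := [:: 1; 2; 2; 4; 4; 1; 3; 6; 5].
Definition hl2 := [:: 3; 3; 6; 6; 5; 5; 7; 7; 7].
Definition c1 k := nth 0 hl1 k.
Definition c2 k := nth 0 hl2 k.
Definition h (i : 'I_9) : hedge 'I_3 := (s (c1 i), s (c2 i)).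
Definition H (S : {set 'I_9}) : {set hedge 'I_3} := h @: S.

Lemma h_on k : k < 9 -> h (on 8 k) = (s (c1 k), s (c2 k)).
Proof. by move=> Hk; rewrite /h /= modn_small. Qed.

Lemma forall_im (T U : finType) (f : T -> U) (A : {set T}) (P : pred U) :
  [forall e, (e \in f @: A) ==> P e] = [forall i, (i \in A) ==> P (f i)].
Proof.
apply/forallP/forallP => H0 x.
  by apply/implyP => Hx; apply: (implyP (H0 (f x))); apply: imset_f.
by apply/implyP => /imsetP [y Hy ->]; exact: (implyP (H0 y)).
Qed.

Lemma mem_im (T U : finType) (f : T -> U) (A : {set T}) p :
  (p \in f @: A) = [exists i, (i \in A) && (f i == p)].
Proof.
apply/imsetP/existsP => [[y Hy ->] | [y /andP [Hy /eqP <-]]]; first by exists y; rewrite Hy eqxx.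
by exists y.
Qed.

Definition memB (bs : seq bool) a b :=
  has (fun k => nth false bs k && ((bits3 (c1 k) == bits3 a) && (bits3 (c2 k) == bits3 b))) (iota 0 9).

Lemma s_eq a b : (s a == s b) = (bits3 a == bits3 b).
Proof. by rewrite eq_bits !bitsS_s. Qed.

Lemma mem_pair S a b : ((s a, s b) \in H S) = memB (bitsS S) a b.
Proof.
rewrite /H mem_im existsI; apply: eq_in_has => k; rewrite mem_iota /= add0n => Hk.
by rewrite nth_bitsS // h_on // xpair_eqE !s_eq.
Qed.

Definition rbK (hK : nat -> nat -> bool) bs a b :=
  (hK a b && ~~ memB bs a b) || memB bs b a.

Lemma disj2 (T : finType) (a b c d : T) :
  [disjoint [set a; b] & [set c; d]] = [&& a != c, a != d, b != c & b != d].
Proof.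
apply/idP/and4P.
- move=> H0; split; apply/eqP => E; move: H0; rewrite disjoint_sym.
  + by move/disjoint_setI0/setP/(_ a); rewrite !inE E !eqxx.
  + by move/disjoint_setI0/setP/(_ a); rewrite !inE E !eqxx ?orbT.
  + by move/disjoint_setI0/setP/(_ b); rewrite !inE E !eqxx ?orbT.
  + by move/disjoint_setI0/setP/(_ b); rewrite !inE E !eqxx ?orbT.
- case=> H1 H2 H3 H4; rewrite -setI_eq0; apply/eqP/setP => x; rewrite !inE.
  apply/negP => /andP [/orP [] /eqP -> /orP [] /eqP E];
  by move: H1 H2 H3 H4; rewrite E !eqxx.
Qed.

Definition neqh k l := ~~ ((bits3 (c1 k) == bits3 (c1 l)) && (bits3 (c2 k) == bits3 (c2 l))).
Definition dj k l := [&& bits3 (c1 k) != bits3 (c1 l), bits3 (c1 k) != bits3 (c2 l),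
   bits3 (c2 k) != bits3 (c1 l) & bits3 (c2 k) != bits3 (c2 l)].

Definition matchB (hK : nat -> nat -> bool) bs :=
  all (fun k => nth false bs k ==> hK (c1 k) (c2 k)) (iota 0 9) &&
  all (fun k => nth false bs k ==> all (fun l => nth false bs l ==> (neqh k l ==> dj k l)) (iota 0 9)) (iota 0 9).

Section K.
Variable K : {set {set 'I_3}}.
Variable hK : nat -> nat -> bool.
Hypothesis HK : forall a b, hasse K (s a) (s b) = hK a b.

Lemma rel_eq S a b : reversed_rel K (H S) (s a) (s b) = rbK hK (bitsS S) a b.
Proof. by rewrite /reversed_rel /rbK HK !mem_pair. Qed.

Lemma inner_eq S k : k < 9 ->
  [forall e2, (e2 \in H S) ==> ((h (on 8 k) != e2) ==>
     [disjoint [set (h (on 8 k)).1; (h (on 8 k)).2] & [set e2.1; e2.2]])] =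
  all (fun l => nth false (bitsS S) l ==> (neqh k l ==> dj k l)) (iota 0 9).
Proof.
move=> Hk; rewrite forall_im forallI; apply: eq_in_all => l; rewrite mem_iota /= add0n => Hl.
by rewrite nth_bitsS // !h_on // disj2 xpair_eqE !s_eq !modn_small.
Qed.

Lemma match_eq S : matching K (H S) = matchB hK (bitsS S).
Proof.
rewrite /matching /matchB forall_im forallI; congr andb.
  apply: eq_in_all => k; rewrite mem_iota /= add0n => Hk.
  by rewrite nth_bitsS // /= modn_small // HK.
rewrite forall_im forallI.
apply: eq_in_all => k; rewrite mem_iota /= add0n => Hk.
by rewrite nth_bitsS // inner_eq.
Qed.
End K.


Fixpoint allbits n : seq (seq bool) :=
  if n is m.+1 then [seq true :: l | l <- allbits m] ++ [seq false :: l | l <- allbits m]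
  else [:: [::]].

Definition rstep (r : nat -> nat -> bool) (l : seq nat) :=
  [seq foldr maxn 0 [seq (nth 0 l b).+1 | b <- iota 0 8 & r a b] | a <- iota 0 8].
Definition rhoL r := iter 8 (rstep r) (nseq 8 0).
Definition mkmat (r : nat -> nat -> bool) := [seq [seq r a b | b <- iota 0 8] | a <- iota 0 8].
Definition rankAux (r : nat -> nat -> bool) (rl : seq nat) :=
  all (fun a => all (fun b => r a b ==> (nth 0 rl b < nth 0 rl a)) (iota 0 8)) (iota 0 8).
Definition rankM (m : seq (seq bool)) :=
  rankAux (fun a b => nth false (nth [::] m a) b) (rhoL (fun a b => nth false (nth [::] m a) b)).
Definition rankOK (r0 : nat -> nat -> bool) := rankM (mkmat r0).

Definition nb (bs : seq bool) k := nth false bs k.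
Definition perfA bs := [&& nb bs 0, nb bs 2 & nb bs 4].
Definition perfB bs := [&& nb bs 1, nb bs 3 & nb bs 5].
Definition charK hK bs := [&& has id bs, matchB hK bs & ~~ (perfA bs || perfB bs)].
Definition cycA hK bs := rbK hK bs 3 1 && path (rbK hK bs) 1 [:: 5; 4; 6; 2; 3].
Definition cycB hK bs := rbK hK bs 3 2 && path (rbK hK bs) 2 [:: 6; 4; 5; 1; 3].

Definition BFrank hK := all (fun bs => charK hK bs ==> rankOK (rbK hK bs)) (allbits 9).
Definition BFcyc hK := all (fun bs => [&& (matchB hK bs && perfA bs) ==> cycA hK bs &
                                          (matchB hK bs && perfB bs) ==> cycB hK bs]) (allbits 9).
Definition BFrange hK := all (fun a => all (fun b => hK a b ==>
   has (fun k => (bits3 (c1 k) == bits3 a) && (bits3 (c2 k) == bits3 b)) (iota 0 9)) (iota 0 8)) (iota 0 8).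



Lemma allbitsP n bs : size bs = n -> bs \in allbits n.
Proof.
elim: n bs => [|n IH] [|b bs] //= [E]; rewrite mem_cat.
by case: b; [rewrite map_f ?IH | rewrite orbC map_f ?IH].
Qed.

Lemma rank_acyc (T : finType) (r : rel T) (rho : T -> nat) :
  (forall x y, r x y -> rho y < rho x) -> ~~ has_dicycle r.
Proof.
move=> Hr; apply/existsP => [[x /existsP [y /andP [rxy /connectP [p pth lst]]]]].
have : rho (last y p) <= rho y.
  elim: p y pth {lst rxy} => //= z p IH y /andP [ryz pth].
  apply: leq_trans (IH _ pth) _; exact: ltnW (Hr _ _ ryz).
rewrite -lst => Hle; have := Hr _ _ rxy; rewrite ltnNge.
by move/negP; apply; apply: leq_trans Hle (leqnn _).
Qed.

Lemma mkmatE r a b : a < 8 -> b < 8 -> nth false (nth [::] (mkmat r) a) b = r a b.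
Proof.
move=> Ha Hb; rewrite /mkmat (nth_map 0) ?size_iota // (nth_map 0) ?size_iota //.
by rewrite !nth_iota.
Qed.

Section K2.
Variable K : {set {set 'I_3}}.
Variable hK : nat -> nat -> bool.
Hypothesis HK : forall a b, hasse K (s a) (s b) = hK a b.

Lemma acyc_of_rank S : rankOK (rbK hK (bitsS S)) -> ~~ has_dicycle (reversed_rel K (H S)).
Proof.
rewrite /rankOK /rankM /rankAux => /allP Hall.
apply: (rank_acyc (rho := fun x => nth 0 (rhoL (fun a b => nth false (nth [::] (mkmat (rbK hK (bitsS S))) a) b)) (code x))) => x y.
have := rel_eq HK S (code x) (code y); rewrite !s_code => -> rxy.
have Hx : code x \in iota 0 8 by rewrite mem_iota code_lt.
have Hy : code y \in iota 0 8 by rewrite mem_iota code_lt.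
have /allP /(_ _ Hy) := Hall _ Hx.
by rewrite mkmatE ?code_lt // rxy.
Qed.

Lemma cyc_of S a b p : rbK hK (bitsS S) a b -> path (rbK hK (bitsS S)) b p -> last b p = a ->
  has_dicycle (reversed_rel K (H S)).
Proof.
move=> rab pth lst; apply/existsP; exists (s a); apply/existsP; exists (s b).
rewrite (rel_eq HK) rab /=; apply/connectP; exists (map s p).
  rewrite path_map; move: pth; apply: sub_path => u v /=; by rewrite (rel_eq HK).
by rewrite last_map lst.
Qed.

Lemma nonempty_eq S : (H S != set0) = has id (bitsS S).
Proof.
rewrite /H imset_eq0 eq_bits.
have -> : bitsS (set0 : {set 'I_9}) = nseq 9 false by rewrite /bitsS /= !inE.
move: (bitsS S) (size_bitsS S) => bs; elim: bs 9 => [|b bs IH] [|n] //= [E].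
by case: b => //=; rewrite eqseq_cons /= IH.
Qed.

Hypothesis bfr : BFrank hK.
Hypothesis bfc : BFcyc hK.
Hypothesis bfg : BFrange hK.

Lemma P_eq S : ((H S != set0) && acyclic_matching K (H S)) = charK hK (bitsS S).
Proof.
rewrite /acyclic_matching (match_eq HK) nonempty_eq /charK.
have Hin := allbitsP (size_bitsS S).
case Hm : (matchB hK (bitsS S)); last by rewrite !andbF.
case Hne : (has id (bitsS S)); last by []. rewrite !andTb.
case Hp : (perfA (bitsS S)).
  have := allP bfc _ Hin; rewrite Hm Hp /= => /andP [/andP [r1 p1] _].
  by rewrite (cyc_of r1 p1).
case Hq : (perfB (bitsS S)).
  have := allP bfc _ Hin; rewrite Hm Hq /= ?andbT => /andP [_ /andP [r1 p1]].
  by rewrite (cyc_of r1 p1).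
have := allP bfr _ Hin; rewrite /charK Hm Hne Hp Hq /= => Hr.
by rewrite (acyc_of_rank Hr).
Qed.

Lemma range_h e : hasse K e.1 e.2 -> exists i, e = h i.
Proof.
case: e => x y /=; rewrite -(s_code x) -(s_code y) HK => Hh.
have Hx : code x \in iota 0 8 by rewrite mem_iota code_lt.
have Hy : code y \in iota 0 8 by rewrite mem_iota code_lt.
have /allP /(_ _ Hy) := allP bfg _ Hx; rewrite Hh implyTb => /hasP [k].
rewrite mem_iota /= add0n => Hk /andP [E1 E2]; exists (on 8 k).
by rewrite h_on //; congr pair; apply/eqP; rewrite s_eq eq_sym.
Qed.

Lemma morse_char W : W \in morse_complex K <-> exists S, W = H S /\ charK hK (bitsS S).
Proof.
split.
- rewrite inE => HW; exists (h @^-1: W); suff E : W = H (h @^-1: W).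
    by split=> //; rewrite -P_eq -E.
  move: HW => /and3P [_ /andP [/forallP Hm _] _].
  apply/setP => e; apply/idP/imsetP => [He | [i]]; last by rewrite inE => Hi ->.
  have [i Ei] := range_h (implyP (Hm e) He).
  by exists i; rewrite // inE -Ei.
- case=> S [-> Hc]; rewrite inE P_eq //.
Qed.
End K2.


Lemma bfDall : [&& BFrank hD, BFcyc hD & BFrange hD]. Proof. vm_compute. reflexivity. Qed.
Lemma bfBall : [&& BFrank hB, BFcyc hB & BFrange hB]. Proof. vm_compute. reflexivity. Qed.

Definition charD := charK hD.
Definition charB := charK hB.

Lemma morseD W : W \in morse_complex Delta2 <-> exists S, W = H S /\ charD (bitsS S).
Proof. case/and3P: bfDall => *; exact: (morse_char hasseD). Qed.
Lemma morseB W : W \in morse_complex bDelta2 <-> exists S, W = H S /\ charB (bitsS S).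
Proof. case/and3P: bfBall => *; exact: (morse_char hasseB). Qed.

Lemma h_inj_chk : all (fun k => all (fun l =>
   ((bits3 (c1 k) == bits3 (c1 l)) && (bits3 (c2 k) == bits3 (c2 l))) ==> (k == l)) (iota 0 9)) (iota 0 9).
Proof. by vm_compute. Qed.

Lemma h_inj : injective h.
Proof.
move=> i j E; apply: val_inj.
have : h (on 8 (val i)) = h (on 8 (val j)) by rewrite !on_val.
rewrite !h_on ?ltn_ord // => [[/eqP E1 /eqP E2]].
move: E1 E2; rewrite !s_eq => E1 E2.
have Hi : val i \in iota 0 9 by rewrite mem_iota ltn_ord.
have Hj : val j \in iota 0 9 by rewrite mem_iota ltn_ord.
by have /allP /(_ _ Hj) := allP h_inj_chk _ Hi; rewrite E1 E2 /= => /eqP.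
Qed.

Lemma H_inj : injective H.
Proof. exact: imset_inj h_inj. Qed.

Lemma subH A B : (H A \subset H B) = (A \subset B).
Proof.
apply/idP/idP; last exact: imsetS.
move/subsetP => Hs; apply/subsetP => x Hx.
by have := Hs (h x); rewrite !mem_imset //; [apply | exact: h_inj | exact: h_inj].
Qed.

Lemma properH A B : (H A \proper H B) = (A \proper B).
Proof. by rewrite !properE !subH. Qed.

Lemma cardH A : #|H A| = #|A|.
Proof. exact: card_imset h_inj. Qed.

Definition sI (l : seq nat) : {set 'I_9} := [set i : 'I_9 | val i \in l].
Definition bitsL (l : seq nat) := [seq k \in l | k <- iota 0 9].

Lemma bitsS_sI l : bitsS (sI l) = bitsL l.
Proof.
apply/eq_in_map => k; rewrite mem_iota /= add0n => Hk.
by rewrite inE /= modn_small.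
Qed.

Definition Kr (l : seq {set 'I_9}) : {set {set hedge 'I_3}} :=
  [set W | (W \in morse_complex Delta2) && all (fun x => W != H x) l].

Lemma memKr ls x : H (sI x) \in Kr (map sI ls) =
   charD (bitsL x) && all (fun y => bitsL x != bitsL y) ls.
Proof.
rewrite inE all_map; congr andb.
- apply/idP/idP => [/morseD [S [/H_inj <- Hc]] | Hc]; first by rewrite -bitsS_sI.
  by apply/morseD; exists (sI x); rewrite bitsS_sI.
- apply: eq_all => y /=; by rewrite (inj_eq H_inj) eq_bits !bitsS_sI.
Qed.

Definition stepOK (ls : seq (seq nat)) (a b : seq nat) :=
  let ba := bitsL a in let bb := bitsL b in let rem := map bitsL ls in
  [&& charD ba && all (fun y => ba != y) rem, charD bb && all (fun y => bb != y) rem,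
      subb ba bb, ~~ subb bb ba, count id bb == (count id ba).+1 &
      all (fun bs => (charD bs && all (fun y => bs != y) rem && subb ba bs && ~~ subb bs ba)
                        ==> (bs == bb)) (allbits 9)].

Lemma step_collapse ls a b : stepOK ls a b ->
  elementary_collapse (Kr (map sI ls)) (Kr (map sI (b :: a :: ls))).
Proof.
rewrite /stepOK !all_map => /and5P [Ha Hb Hab Hba /andP [Hc Hall]].
exists (H (sI a)), (H (sI b)); split; [|split].
- rewrite !memKr Ha Hb properH properE !sub_bits !bitsS_sI Hab Hba !cardH !card_bits !bitsS_sI.
  by split=> //; apply/eqP.
- move=> r; rewrite inE => /andP [/morseD [S [-> Hc']] Hr].
  rewrite properH properE !sub_bits bitsS_sI => Hp; congr H; apply: bitsS_inj.
  rewrite bitsS_sI; apply/eqP.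
  have := allP Hall _ (allbitsP (size_bitsS S)); rewrite Hc' -andbA Hp andbT => /implyP; apply; rewrite andTb.
  apply/allP => y /mapP [z Hz ->]; have := allP Hr (sI z) (map_f _ Hz).
  by rewrite (inj_eq H_inj) eq_bits bitsS_sI.
- apply/setP => W; rewrite !in_setD1 /Kr !in_set /=.
  case: (W == H (sI a)); case: (W == H (sI b)); rewrite /= ?andbF ?andbT //.
Qed.

Fixpoint chain (ls : seq (seq nat)) (st : seq (seq nat * seq nat)) : bool :=
  if st is (a, b) :: st' then stepOK ls a b && chain (b :: a :: ls) st' else true.
Fixpoint finals (ls : seq (seq nat)) (st : seq (seq nat * seq nat)) :=
  if st is (a, b) :: st' then finals (b :: a :: ls) st' else ls.

Lemma chain_collapses ls st : chain ls st ->
  collapses (Kr (map sI ls)) (Kr (map sI (finals ls st))).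
Proof.
elim: st ls => [|[a b] st IH] ls /=; first by move=> _; apply: collapses_refl.
case/andP => H1 H2; apply: collapses_step (step_collapse H1) (IH _ H2).
Qed.

Definition steps : seq (seq nat * seq nat) :=
  [:: ([:: 6; 4], [:: 6; 4; 2]); ([:: 6; 2], [:: 6; 2; 5]); ([:: 6; 5], [:: 6; 5; 3]); ([:: 6], [:: 6; 3]);
      ([:: 7; 0], [:: 7; 0; 4]); ([:: 7; 4], [:: 7; 4; 1]); ([:: 7; 1], [:: 7; 1; 5]); ([:: 7], [:: 7; 5]);
      ([:: 8; 2], [:: 8; 2; 0]); ([:: 8; 0], [:: 8; 0; 3]); ([:: 8; 3], [:: 8; 3; 1]); ([:: 8], [:: 8; 1])].

Lemma chain_ok : chain [::] steps.
Proof. vm_compute. reflexivity. Qed.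

Lemma final_ok : all (fun bs => (charD bs && all (fun y => bs != y) (map bitsL (finals [::] steps)))
   == charB bs) (allbits 9).
Proof. vm_compute. reflexivity. Qed.

Lemma BsubD_ok : all (fun bs => charB bs ==> charD bs) (allbits 9).
Proof. by vm_compute. Qed.


Definition gidx (p : 'I_3 * bool) : nat := nth 0 (if p.2 then [:: 3; 5; 1] else [:: 0; 2; 4]) p.1.
Definition g (p : 'I_3 * bool) : 'I_9 := on 8 (gidx p).
Definition pts : seq ('I_3 * bool) :=
  [seq (on 2 i, b) | i <- iota 0 3, b <- [:: true; false]].

Lemma pts_all p : p \in pts.
Proof. by case: p => [[[|[|[|m]]] Hm] []]. Qed.

Lemma gidx_lt p : gidx p < 9.
Proof. by case: p => [[[|[|[|m]]] Hm] []]. Qed.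

Lemma gidx_chk : all (fun p => all (fun q => (gidx p == gidx q) ==> (p == q)) pts) pts.
Proof. by vm_compute. Qed.

Lemma f_inj : injective (fun p => h (g p)).
Proof.
move=> p q /h_inj /(congr1 val) /=; rewrite !modn_small ?gidx_lt // => E.
have /allP /(_ _ (pts_all q)) := allP gidx_chk _ (pts_all p).
by rewrite E eqxx => /eqP.
Qed.

Lemma set1_sI a : a < 9 -> [set on 8 a] = sI [:: a].
Proof. move=> Ha; apply/setP => i; rewrite !inE -(inj_eq val_inj) /= modn_small //. Qed.
Lemma set2_sI a b : a < 9 -> b < 9 -> [set on 8 a; on 8 b] = sI [:: a; b].
Proof.
move=> Ha Hb; apply/setP => i; rewrite !inE -!(inj_eq val_inj) /= !modn_small //.
Qed.

Lemma iso_chk1 : all (fun p => charB (bitsL [:: gidx p]) &&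
   all (fun q => prism_edge p q ==> charB (bitsL [:: gidx p; gidx q])) pts) pts.
Proof. by vm_compute. Qed.

Lemma iso_chk2 : all (fun bs => charB bs ==>
   (has (fun p => bs == bitsL [:: gidx p]) pts ||
    has (fun pq => prism_edge pq.1 pq.2 && (bs == bitsL [:: gidx pq.1; gidx pq.2]))
      [seq (p, q) | p <- pts, q <- pts])) (allbits 9).
Proof. by vm_compute. Qed.

Lemma fimset (x : {set 'I_3 * bool}) : [set h (g p) | p in x] = H [set g p | p in x].
Proof. by rewrite /H -imset_comp. Qed.

Lemma iso_part : simplicial_iso prism1 (morse_complex bDelta2).
Proof.
exists (fun p => h (g p)); split; first exact: f_inj.
apply/setP => W; apply/idP/imsetP.
- move/morseB => [S [-> Hc]].
  have := allP iso_chk2 _ (allbitsP (size_bitsS S)); rewrite Hc => /orP [].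
  + move=> /hasP [p _ /eqP E]; exists [set p].
      by rewrite inE; apply/orP; left; apply/existsP; exists p.
    rewrite fimset imset_set1; congr H; apply: bitsS_inj.
    by rewrite /g set1_sI ?gidx_lt // bitsS_sI.
  + move=> /hasP [[p q] _ /andP [Hpq /eqP E]]; exists [set p; q].
      rewrite inE; apply/orP; right; apply/existsP; exists p; apply/existsP; exists q.
      by rewrite Hpq eqxx.
    rewrite fimset imsetU1 imset_set1; congr H; apply: bitsS_inj.
    by rewrite /g set2_sI ?gidx_lt // bitsS_sI.
- case=> x; rewrite inE => /orP [/existsP [p /eqP ->] | /existsP [p /existsP [q /andP [Hpq /eqP ->]]]] ->.
  + rewrite fimset imset_set1; apply/morseB; exists [set g p]; split=> //.
    have /andP [H1 _] := allP iso_chk1 _ (pts_all p).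
    by rewrite /g set1_sI ?gidx_lt // bitsS_sI.
  + rewrite fimset imsetU1 imset_set1; apply/morseB; exists [set g p; g q]; split=> //.
    have /andP [_ /allP /(_ _ (pts_all q))] := allP iso_chk1 _ (pts_all p).
    by rewrite Hpq /g set2_sI ?gidx_lt // bitsS_sI.
Qed.

Lemma scD : simplicial_complex Delta2.
Proof.
apply/andP; split; first by rewrite inE eqxx.
apply/forallP => x; apply/implyP => _; apply/forallP => t; apply/implyP => /andP [Ht _].
by rewrite inE.
Qed.

Lemma scB : simplicial_complex bDelta2.
Proof.
apply/andP; split; first by rewrite inE eqxx.
apply/forallP => x; apply/implyP; rewrite inE => /andP [_ Hx].
apply/forallP => t; apply/implyP => /andP [Ht Hs]; rewrite inE Ht /=.
apply: contraNneq Hx => E; rewrite E in Hs; apply/eqP; apply/setP => i.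
by rewrite inE; apply: (subsetP Hs); rewrite inE.
Qed.

Lemma sub_part : morse_complex bDelta2 \subset morse_complex Delta2.
Proof.
apply/subsetP => W /morseB [S [-> Hc]]; apply/morseD; exists S; split=> //.
by have := allP BsubD_ok _ (allbitsP (size_bitsS S)); rewrite Hc.
Qed.

Lemma collapse_part : collapses (morse_complex Delta2) (morse_complex bDelta2).
Proof.
have E0 : morse_complex Delta2 = Kr (map sI [::]).
  by apply/setP => W; rewrite [in RHS]inE andbT.
have E1 : Kr (map sI (finals [::] steps)) = morse_complex bDelta2.
  apply/setP => W; apply/idP/idP.
  - rewrite inE => /andP [/morseD [S [-> Hc]] Hr]; apply/morseB; exists S; split=> //.
    have := allP final_ok _ (allbitsP (size_bitsS S)); rewrite Hc => /eqP <-.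
    apply/allP => y /mapP [z Hz ->]; have := allP Hr (sI z) (map_f _ Hz).
    by rewrite (inj_eq H_inj) eq_bits bitsS_sI.
  - move/morseB => [S [-> Hc]]; rewrite inE; apply/andP; split.
      apply/morseD; exists S; split=> //.
      by have := allP BsubD_ok _ (allbitsP (size_bitsS S)); rewrite Hc.
    have := allP final_ok _ (allbitsP (size_bitsS S)); rewrite Hc => /eqP/andP [_ Hr].
    apply/allP => y /mapP [z Hz ->]; have := allP Hr (bitsL z) (map_f _ Hz).
    by rewrite (inj_eq H_inj) eq_bits bitsS_sI.
rewrite E0 -E1; exact: chain_collapses chain_ok.
Qed.

Theorem mainTheorem9 :
  simplicial_complex Delta2 /\ simplicial_complex bDelta2 /\
  simplicial_iso prism1 (morse_complex bDelta2) /\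
  morse_complex bDelta2 \subset morse_complex Delta2 /\
  collapses (morse_complex Delta2) (morse_complex bDelta2).
Proof.
split; first exact: scD. split; first exact: scB. split; first exact: iso_part.
split; [exact: sub_part | exact: collapse_part].
Qed.
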